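(* Let $d$ be a prime and $(p_{nm})_{n,m\in\mathbb{Z}_d}$ a probability distribution on $\mathbb{Z}_d\times\mathbb{Z}_d$. Consider the $d+1$ lines through the origin $\{(0,k):k\in\mathbb{Z}_d\}$ and $\{(k,ak):k\in\mathbb{Z}_d\}$ for $a\in\mathbb{Z}_d$, and let $L_1,\dots,L_{d+1}$ be the sums of $p_{nm}$ over these lines. If $p_{00}>1/d$, then $L_{\max}:=\max\{L_1,\dots,L_{d+1}\}>\frac{2}{d+1}$.
   Context: The $p_{nm}$ are Bell-diagonal probabilities of a two-qudit state; the $d+1$ lines correspond to the $d+1$ mutually unbiased bases, and $L_i$ is the weight associated with the $i$-th one. *)

(* Defs.v *)
From HB Require Import structures.
From mathcomp Require Import all_boot all_order all_algebra.
Set Implicit Arguments. Unset Strict Implicit. Unset Printing Implicit Defensive.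
Import Order.TTheory GRing.Theory Num.Theory.
Local Open Scope ring_scope.

(* Lines through the origin of Z_d x Z_d: [None] is the vertical line
   {(0,k) : k}, [Some a] is the line {(k, a k) : k}. *)
Definition line_weight (R : realFieldType) (d : nat)
    (p : 'Z_d -> 'Z_d -> R) (l : option 'Z_d) : R :=
  match l with
  | None => \sum_(k : 'Z_d) p 0 k
  | Some a => \sum_(k : 'Z_d) p k (a * k)
  end.

(* L_max = max over the d+1 lines (the index set is nonempty and all
   weights are nonnegative for a probability distribution). *)
Definition Lmax (R : realFieldType) (d : nat) (p : 'Z_d -> 'Z_d -> R) : R :=
  \big[Num.max/0]_(l : option 'Z_d) line_weight p l.

(* Main.v *)
Require Import Defs.
From mathcomp Require Import all_boot all_order all_algebra.
Import Order.TTheory GRing.Theory Num.Theory.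
Local Open Scope ring_scope.

Lemma Zp_unit_nz (d : nat) (k : 'Z_d) : prime d -> k != 0 -> k \is a GRing.unit.
Proof.
move=> pd kn0.
have d1 : (1 < d)%N by apply: prime_gt1.
have kd : (k < d)%N.
  by apply: leq_trans (ltn_ord k) _; rewrite Zp_cast.
have -> : k = (k : nat)%:R :> 'Z_d by rewrite natr_Zp.
rewrite unitZpE // prime_coprime //.
apply/negP => /(dvdn_leq) H.
have k0 : (0 < k)%N by rewrite lt0n; apply: contra kn0 => /eqP Hk; apply/eqP; apply: val_inj.
have := H k0; rewrite leqNgt kd //.
Qed.

Theorem lemma5 (R : realFieldType) (d : nat) (p : 'Z_d -> 'Z_d -> R) :
  prime d ->
  (forall n m, 0 <= p n m) ->
  \sum_(n : 'Z_d) \sum_(m : 'Z_d) p n m = 1 ->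
  p 0 0 > 1 / d%:R ->
  Lmax p > 2 / (d%:R + 1).
Proof.
move=> pd p0 tot big.
have d1 : (1 < d)%N by apply: prime_gt1.
have cardZ : #|'Z_d| = d by rewrite card_ord Zp_cast.
have dpos : 0 < d%:R :> R by rewrite ltr0n ltnW.
have hsum : \sum_(l : option 'Z_d) line_weight p l = 1 + d%:R * p 0 0.
  rewrite (bigD1 None) //= (reindex_onto Some (odflt 0)); last by case.
  rewrite [X in _ + X](eq_bigl xpredT); last by move=> a; rewrite /= eqxx.
  have E : forall a : 'Z_d, \sum_(k : 'Z_d) p k (a * k)
        = p 0 0 + \sum_(k : 'Z_d | k != 0) p k (a * k).
    by move=> a; rewrite (bigD1 (0 : 'Z_d)) //= mulr0.
  rewrite (eq_bigr _ (fun a _ => E a)) big_split /= sumr_const.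
  rewrite cardZ.
  rewrite exchange_big /=.
  have F : forall k : 'Z_d, k != 0 -> \sum_(a : 'Z_d) p k (a * k) = \sum_(m : 'Z_d) p k m.
    move=> k kn0.
    by rewrite [RHS](reindex_inj (mulIr (Zp_unit_nz _ _ pd kn0))).
  rewrite (eq_bigr _ F).
  rewrite mulr_natl -tot [in RHS](bigD1 (0 : 'Z_d)) //=.
  by rewrite addrCA addrA [_ + p 0 0 *+ d]addrC -addrA.
have le : forall l, line_weight p l <= Lmax p.
  move=> l; exact: le_bigmax.
have H2 : 1 + d%:R * p 0 0 <= (d%:R + 1) * Lmax p.
  rewrite -hsum.
  apply: le_trans (_ : \sum_(l : option 'Z_d) Lmax p <= _).
    by apply: ler_sum => l _; apply: le.
  by rewrite sumr_const card_option cardZ mulrDl mul1r mulr_natl mulrS addrC.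
have H1 : 2 < 1 + d%:R * p 0 0.
  rewrite ltr_pdivrMr // in big.
  rewrite (_ : 2 = 1 + 1) //; rewrite ltrD2l; by rewrite mulrC.
have dp1 : 0 < d%:R + 1 :> R by rewrite ltr_wpDr.
rewrite ltr_pdivrMr // mulrC.
exact: lt_le_trans H1 H2.
Qed.
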